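(* Let $G$ be the complete graph on $\{0,\dots,n\}$ oriented by $i\to j$ iff $i<j$. For every spanning tree $T\in\mathbb{B}(G)$, $$p_{G\setminus T}=\sum_{s\in S_n}(-1)^{\operatorname{mm}(G\setminus T,\,s)}\,C(T,T_s)\,\mathbf{P}_s .$$
   Context: Polynomials are in variables $t=(t(1),\dots,t(n))$ with $t(0):=0$. To the edge of $G$ between $i<j$ associate $p_x(t)=t(j)-t(i)$; for a set $Y$ of edges oriented as in $G$, $p_Y:=\prod_{x\in Y}p_x$. $\mathbb{B}(G)$ is the set of spanning trees of $G$; $G\setminus T$ is the set of edges not in $T$. $S_n$ is the set of permutations of $\{1,\dots,n\}$, extended by $s(0):=0$. For $s\in S_n$, $G^s$ orients the edge $\{s(i),s(j)\}$, $i<j$, as $s(i)\to s(j)$. The path tree $T_s$ is the spanning tree with edges $\{s(k-1),s(k)\}$, $k=1,\dots,n$. $\mathbf{P}_s:=\prod(t(s(j))-t(s(i)))$ over all $0\le i<j\le n$ with $j\ne i+1$. For a set $Y$ of edges and $s\in S_n$, $\operatorname{mm}(Y,s)$ is the number of edges of $Y$ whose orientation in $G$ differs from their orientation in $G^s$ (i.e. edges $\{a,b\}$, $a<b$, with $s^{-1}(a)>s^{-1}(b)$). For $T\in\mathbb{B}(G)$: $i\prec_T j$ iff $i\neq j$ and the path in $T$ from $0$ to $j$ contains $i$; $T,T'$ are compatible if some total order on $\{0,\dots,n\}$ extends both $\prec_T$ and $\prec_{T'}$; $C(T,T')=1$ if compatible, $0$ otherwise. *)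

(* Defs.v *)
From HB Require Import structures.
From mathcomp Require Import all_boot all_order all_algebra fingroup perm.
From Stdlib Require Import ClassicalEpsilon.
Set Implicit Arguments. Unset Strict Implicit. Unset Printing Implicit Defensive.
Import GRing.Theory.
Local Open Scope ring_scope.

(* Vertices of G are 'I_n.+1 = {0,...,n}.  An edge {i,j}, i<j, of the complete
   graph G is stored as the oriented pair (i,j) with i < j (orientation of G). *)
Definition vtx (n : nat) := 'I_n.+1.
Definition edge (n : nat) := ('I_n.+1 * 'I_n.+1)%type.

Definition is_Gedge n (e : edge n) : bool := (e.1 < e.2)%N.

Definition edge_of n (a b : 'I_n.+1) : edge n := if (a < b)%N then (a, b) else (b, a).

Definition adj n (T : {set edge n}) : rel 'I_n.+1 :=
  fun x y => ((x, y) \in T) || ((y, x) \in T).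

Definition is_spanning_tree n (T : {set edge n}) : Prop :=
  (forall e, e \in T -> is_Gedge e) /\
  (forall x y : 'I_n.+1, connect (adj T) x y) /\
  (forall c : seq 'I_n.+1, uniq c -> (3 <= size c)%N -> ~~ path.cycle (adj T) c).

Definition Gminus n (T : {set edge n}) : {set edge n} :=
  [set e | is_Gedge e & e \notin T].

(* t(0) := 0, t(k+1) := t k *)
Definition text (R : comRingType) n (t : 'I_n -> R) (i : 'I_n.+1) : R :=
  match unlift ord0 i with Some k => t k | None => 0 end.

Definition pY (R : comRingType) n (t : 'I_n -> R) (Y : {set edge n}) : R :=
  \prod_(e in Y) (text t e.2 - text t e.1).

(* S_n is represented by the permutations s of {0..n} with s 0 = 0. *)
Definition is_Sn n (s : {perm 'I_n.+1}) : bool := s ord0 == ord0.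

Definition Tpath n (s : {perm 'I_n.+1}) : {set edge n} :=
  [set edge_of (s (widen_ord (leqnSn n) k)) (s (lift ord0 k)) | k : 'I_n].

Definition Ps (R : comRingType) n (t : 'I_n -> R) (s : {perm 'I_n.+1}) : R :=
  \prod_(i : 'I_n.+1) \prod_(j : 'I_n.+1 | (i < j)%N && (j != i.+1 :> nat))
     (text t (s j) - text t (s i)).

Definition mm n (Y : {set edge n}) (s : {perm 'I_n.+1}) : nat :=
  #|[set e in Y | ((s^-1)%g e.2 < (s^-1)%g e.1)%N]|.

Definition precT n (T : {set edge n}) (i j : 'I_n.+1) : Prop :=
  i != j /\ exists p : seq 'I_n.+1,
    [/\ path (adj T) ord0 p, last ord0 p = j, uniq (ord0 :: p) & i \in ord0 :: p].

(* compatibility: some total order on {0..n} (given by an injective ranking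
   into nat) extends both <_T and <_T' *)
Definition compatible n (T T' : {set edge n}) : Prop :=
  exists r : 'I_n.+1 -> nat, injective r /\
    forall i j, (precT T i j \/ precT T' i j) -> (r i < r j)%N.

Definition Ccoef (R : comRingType) n (T T' : {set edge n}) : R :=
  if excluded_middle_informative (compatible T T') then 1 else 0.

(* Main.v *)
Require Import Defs.
From HB Require Import structures.
From mathcomp Require Import all_boot all_order all_algebra fingroup perm.
From mathcomp Require Import ring zify.
From Stdlib Require Import ClassicalEpsilon.
Import GRing.Theory.
Set Implicit Arguments. Unset Strict Implicit. Unset Printing Implicit Defensive.

Section Gen.
Variable n : nat.
Local Notation V := 'I_n.+1.

Lemma edge_ofE (u w u' w' : V) : edge_of u w = edge_of u' w' ->
  (u = u' /\ w = w') \/ (u = w' /\ w = u').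
Proof.
rewrite /edge_of.
by case: ltnP => h1; case: ltnP => h2 [E1 E2]; subst; auto.
Qed.

Lemma edge_ofC (u w : V) : edge_of u w = edge_of w u.
Proof.
rewrite /edge_of; case: ltngtP => // h.
by have -> : u = w by apply/val_inj.
Qed.

Lemma Gedge_of (u w : V) : is_Gedge (edge_of u w) = (u != w).
Proof.
rewrite /is_Gedge /edge_of; case: (ltngtP u w) => h /=.
- by rewrite neq_ltn h.
- by rewrite neq_ltn h orbT.
- by rewrite h ltnn; apply/esym/negbTE; rewrite negbK; apply/eqP/val_inj.
Qed.

Definition pos (s : {perm V}) (v : V) : nat := (s^-1)%g v.

Lemma pos_inj s : injective (pos s).
Proof. by move=> u v /val_inj /perm_inj. Qed.

Lemma pos_lt s v : pos s v < n.+1.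
Proof. exact: ltn_ord. Qed.

Lemma posK s (i : V) : pos s (s i) = i.
Proof. by rewrite /pos permK. Qed.

Lemma pos0 s : is_Sn s -> pos s ord0 = 0.
Proof. by move=> /eqP h; rewrite /pos -{1}h permK. Qed.

Definition extb (par : V -> V) (s : {perm V}) : bool :=
  is_Sn s && [forall v : V, (v != ord0) ==> (pos s (par v) < pos s v)].

Lemma extP par s : reflect (is_Sn s /\ forall v : V, v != ord0 -> pos s (par v) < pos s v) (extb par s).
Proof.
apply: (iffP andP) => [[h /forallP H]|[h H]]; split => //.
  by move=> v hv; have /implyP := H v; apply.
by apply/forallP => v; apply/implyP; apply: H.
Qed.

Definition Epar (par : V -> V) : {set edge n} :=
  [set edge_of (par v) v | v in [pred v : V | v != ord0]].

Lemma in_Epar par e : reflect (exists2 v : V, v != ord0 & e = edge_of (par v) v) (e \in Epar par).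
Proof. by apply: (iffP imsetP) => [[v hv ->]|[v hv ->]]; exists v. Qed.

Definition upd (par : V -> V) (b a : V) : V -> V := fun x => if x == b then a else par x.

End Gen.

Section Prod.
Variable n : nat.
Local Notation V := 'I_n.+1.
Variable R : comRingType.
Variable t : 'I_n -> R.
Local Open Scope ring_scope.

Definition xx (v : V) : R := text t v.
Definition diff (e : edge n) : R := xx e.2 - xx e.1.
Definition Pi (f : edge n -> R) (E : {set edge n}) : R :=
  \prod_(e | is_Gedge e) (if e \in E then 1 else f e).
Definition Kp (f : edge n -> R) (E : {set edge n}) e2 : R :=
  \prod_(e | is_Gedge e && (e != e2)) (if e \in E then 1 else f e).
Definition sgs (s : {perm V}) (e : edge n) : R :=
  if (pos s e.2 < pos s e.1)%N then -1 else 1.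

Lemma prod_Gminus f E : \prod_(e in Gminus E) f e = Pi f E.
Proof.
rewrite /Pi big_mkcond [RHS]big_mkcond; apply: eq_bigr => e _.
by rewrite inE; case: is_Gedge; case: (e \in E).
Qed.

Lemma pY_Pi E : pY t (Gminus E) = Pi diff E.
Proof. exact: prod_Gminus. Qed.

Lemma mm_Pi E s : (-1) ^+ mm (Gminus E) s = Pi (sgs s) E.
Proof.
rewrite -prod_Gminus /sgs /mm -prodr_const.
rewrite [RHS](bigID (fun e : edge n => (pos s e.2 < pos s e.1)%N)) /=.
rewrite [X in _ = _ * X]big1 ?mulr1; last by move=> e /andP[_ /negbTE ->].
rewrite [RHS](eq_bigr (fun _ => -1)); last by move=> e /andP[_ ->].
by apply: eq_bigl => e; rewrite inE.
Qed.

Lemma Pi_swap f (E1 E2 : {set edge n}) (e1 e2 : edge n) : is_Gedge e1 -> is_Gedge e2 -> e1 != e2 ->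
  e1 \in E1 -> e2 \notin E1 -> e1 \notin E2 -> e2 \in E2 ->
  (forall e, e != e1 -> e != e2 -> (e \in E2) = (e \in E1)) ->
  Pi f E1 = f e2 * Kp f E1 e2 /\ Pi f E2 = f e1 * Kp f E1 e2.
Proof.
move=> g1 g2 ne h1 h2 h3 h4 H; split.
  by rewrite /Pi (bigD1 e2) //= (negbTE h2).
rewrite /Pi (bigD1 e2) //= h4 mul1r /Kp.
rewrite (bigD1 e1) /=; last by rewrite g1 ne.
rewrite [in RHS](bigD1 e1) /=; last by rewrite g1 ne.
rewrite (negbTE h3) h1 mul1r; congr (_ * _).
apply: eq_bigr => e /andP[/andP[_ ne2] ne1]; by rewrite H.
Qed.

Lemma Pi_sq f E : (forall e, f e * f e = 1) -> Pi f E * Pi f E = 1.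
Proof.
move=> h; rewrite /Pi -big_split /=; apply: big1 => e _.
by case: (e \in E); rewrite ?mulr1 ?h.
Qed.

End Prod.

Section Path.
Variable n : nat.
Local Notation V := 'I_n.+1.
Variable R : comRingType.
Variable t : 'I_n -> R.
Local Open Scope ring_scope.

Lemma Pi_mul (f g : edge n -> R) E : Pi (fun e => f e * g e) E = Pi f E * Pi g E.
Proof.
rewrite /Pi -big_split /=; apply: eq_bigr => e _.
by case: (e \in E); rewrite ?mulr1.
Qed.

Lemma path_Pi (s : {perm V}) (E : {set edge n}) :
  (forall u w : V, (pos s u < pos s w)%N -> (edge_of u w \in E) = (pos s w == (pos s u).+1)) ->
  Pi (fun e => sgs R s e * diff t e) E = Ps t s.
Proof.
move=> HE.
rewrite /Pi (eq_bigr (fun e => if e \notin E then sgs R s e * diff t e else 1)); last first.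
  by move=> e _; case: (e \in E).
rewrite -big_mkcondr /=.
rewrite (reindex_onto (fun q : V * V => edge_of q.1 q.2)
   (fun e : edge n => if (pos s e.1 < pos s e.2)%N then e else (e.2, e.1))); last first.
  move=> [u w] /andP[/= g _]; rewrite /is_Gedge /= in g.
  case: ifP => _ /=; rewrite /edge_of /= ?g //.
  by rewrite ltnNge ltnW.
pose F := fun q : V * V => xx t q.2 - xx t q.1.
rewrite (eq_bigl (fun q : V * V => (pos s q.1 < pos s q.2)%N && (pos s q.2 != (pos s q.1).+1))); last first.
  move=> [u w] /=.
  case: (ltngtP (pos s u) (pos s w)) => hp.
  - rewrite HE //= Gedge_of.
    have -> : (u != w) by apply/eqP => E'; move: hp; rewrite E' ltnn.
    rewrite /edge_of; case: (ltngtP u w) => h /=.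
    + by rewrite hp eqxx andbT.
    + by rewrite ltnNge (ltnW hp) /= eqxx andbT.
    + have ew : u = w by apply/val_inj.
      by move: hp; rewrite ew ltnn.
  - rewrite /=; apply/negbTE.
    rewrite Gedge_of; apply/negP => /andP[/andP[ne _]].
    rewrite /edge_of; case: (ltngtP u w) => h /=.
    + rewrite ltnNge (ltnW hp) /= => /eqP [E1 E2].
      by move: h; rewrite E1 ltnn.
    + rewrite hp => /eqP [E1 E2].
      by move: h; rewrite E1 ltnn.
    + have ew : u = w by apply/val_inj.
      by rewrite ew eqxx in ne.
  - have ew : u = w by apply: (pos_inj hp).
    by rewrite ew Gedge_of eqxx.
rewrite (eq_bigr F); last first.
  move=> [u w] /= /andP[hp _]; rewrite /F /sgs /diff /edge_of.
  case: (ltngtP u w) => h /=.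
  - by rewrite ltnNge ltnW // mul1r.
  - by rewrite hp mulN1r opprB.
  - have ew : u = w by apply/val_inj.
    by move: hp; rewrite ew ltnn.
rewrite /Ps pair_big_dep /=.
rewrite (reindex (fun q : V * V => (s q.1, s q.2))) /=; last first.
  apply: onW_bij.
  exists (fun q : V * V => ((s^-1)%g q.1, (s^-1)%g q.2)).
  - by move=> [u w] /=; rewrite !permK.
  - by move=> [u w] /=; rewrite !permKV.
apply: eq_big => [[i j]|[i j] _] /=; first by rewrite !posK.
by rewrite /F.
Qed.

Lemma Pi_sgs_sq (s : {perm V}) (E : {set edge n}) : Pi (sgs R s) E * Pi (sgs R s) E = 1.
Proof. by apply: Pi_sq => e; rewrite /sgs; case: ifP; rewrite ?mulr1 // mulrNN mulr1. Qed.

Lemma path_pY (s : {perm V}) (E : {set edge n}) :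
  (forall u w : V, (pos s u < pos s w)%N -> (edge_of u w \in E) = (pos s w == (pos s u).+1)) ->
  pY t (Gminus E) = (-1) ^+ mm (Gminus E) s * Ps t s.
Proof.
move=> HE; rewrite -(path_Pi HE) Pi_mul pY_Pi mm_Pi mulrA Pi_sgs_sq mul1r //.
Qed.

End Path.

Section Tools.
Variable n : nat.
Local Notation V := 'I_n.+1.

Lemma rank_perm (key : V -> nat) : injective key -> (forall v, key ord0 <= key v) ->
  exists s : {perm V}, is_Sn s /\ forall u v, (pos s u < pos s v) = (key u < key v).
Proof.
move=> kinj kmin.
pose rk v := #|[set u | key u < key v]|.
have rk_lt v : rk v < n.+1.
  rewrite -[n.+1]card_ord -cardsT; apply: proper_card; apply/properP; split.
    by apply/subsetP => u; rewrite inE.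
  by exists v; rewrite ?inE // ltnn.
have rk_mono u v : key u < key v -> rk u < rk v.
  move=> h; apply: proper_card; apply/properP; split.
    by apply/subsetP => z; rewrite !inE => hz; apply: ltn_trans hz h.
  by exists u; rewrite !inE ?ltnn.
have rk_le u v : key u <= key v -> rk u <= rk v.
  move=> h; apply: subset_leq_card; apply/subsetP => z; rewrite !inE => hz.
  exact: leq_trans hz h.
have rkE u v : (rk u < rk v) = (key u < key v).
  apply/idP/idP; last exact: rk_mono.
  by apply: contraLR; rewrite -!leqNgt; apply: rk_le.
pose f v := Ordinal (rk_lt v).
have finj : injective f.
  move=> u v /(congr1 val) /= e; apply: kinj.
  by case: (ltngtP (key u) (key v)) => // /rk_mono; rewrite e ltnn.
pose sig := perm finj.
exists (sig^-1)%g.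
have posE v : pos (sig^-1)%g v = rk v by rewrite /pos invgK permE.
split.
  have e0 : sig ord0 = ord0.
    apply/val_inj; rewrite permE /= /rk; apply/eqP; rewrite cards_eq0; apply/eqP.
    by apply/setP => u; rewrite !inE ltnNge kmin.
  by rewrite /is_Sn -{1}e0 permK.
by move=> u v; rewrite !posE rkE.
Qed.

Lemma posS (s : {perm V}) k : k < n.+1 -> pos s (s (inord k)) = k.
Proof. by move=> h; rewrite posK inordK. Qed.

Lemma pos_inv (s : {perm V}) v : s (inord (pos s v)) = v.
Proof. by rewrite inord_val /pos permKV. Qed.

Lemma pos_gt0 (s : {perm V}) v : is_Sn s -> v != ord0 -> 0 < pos s v.
Proof.
move=> hs hv; rewrite lt0n; apply/eqP => h.
by move/eqP: hv; apply; apply: (@pos_inj _ s); rewrite h pos0.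
Qed.

Lemma pos_neq0 (s : {perm V}) v : is_Sn s -> 0 < pos s v -> v != ord0.
Proof. by move=> hs; apply: contraTneq => ->; rewrite pos0. Qed.

Lemma ext_upd par s (a b : V) : par a = par b -> a != ord0 -> b != ord0 -> a != b ->
  extb (upd par b a) s = extb par s && (pos s a < pos s b).
Proof.
move=> eab ha hb nab; apply/idP/idP.
  move/extP => [hs H]; have hb' := H b hb; rewrite /upd eqxx in hb'.
  rewrite hb' andbT; apply/extP; split => // v hv.
  case: (eqVneq v b) => [->|nvb].
    rewrite -eab; have := H a ha; rewrite /upd (negbTE nab) => h.
    exact: ltn_trans h hb'.
  by have := H v hv; rewrite /upd (negbTE nvb).
case/andP => /extP [hs H] hab; apply/extP; split => // v hv.
by rewrite /upd; case: (eqVneq v b) => [->|_] //; apply: H.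
Qed.

Lemma Epar_swap par (a b : V) : b != ord0 -> a != b -> par b != a -> par b != b -> par a != b ->
  (par b != ord0 -> par (par b) != b) ->
  forall (R : comRingType) (f : edge n -> R),
  Pi f (Epar par) = (f (edge_of a b) * Kp f (Epar par) (edge_of a b))%R /\
  Pi f (Epar (upd par b a)) = (f (edge_of (par b) b) * Kp f (Epar par) (edge_of a b))%R.
Proof.
move=> hb nab npa npb npab hpp R f.
apply: Pi_swap.
- by rewrite Gedge_of.
- by rewrite Gedge_of.
- apply/eqP => /edge_ofE [[E1 _]|[E1 E2]]; first by rewrite E1 eqxx in npa.
  by rewrite E1 eqxx in npb.
- by apply/in_Epar; exists b.
- apply/in_Epar => -[v hv /edge_ofE [[E1 E2]|[E1 E2]]].
    by move: npa; rewrite E1 E2 eqxx.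
  by move: npab; rewrite E1 E2 eqxx.
- apply/in_Epar => -[v hv /edge_ofE [[E1 E2]|[E1 E2]]].
    by move: E1; rewrite -E2 /upd eqxx => E1; rewrite E1 eqxx in npa.
  move: E2 hv; rewrite -E1 /upd (negbTE npb) => E2 hv.
  by have := hpp hv; rewrite -E2 eqxx.
- by apply/in_Epar; exists b => //; rewrite /upd eqxx.
move=> e ne1 ne2; apply/in_Epar/in_Epar => -[v hv ev]; exists v => //.
  move: ev; rewrite /upd; case: (eqVneq v b) => // evb ev.
  by rewrite ev evb eqxx in ne2.
rewrite /upd; case: (eqVneq v b) => // evb.
by rewrite ev evb eqxx in ne1.
Qed.

Variable R : comRingType.
Local Open Scope ring_scope.

Definition sg (u w : V) : R := if (w < u)%N then -1 else 1.

Lemma sgs_edge (s : {perm V}) (u w : V) : (pos s u < pos s w)%N -> sgs R s (edge_of u w) = sg u w.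
Proof.
move=> hp; rewrite /sgs /sg /edge_of; case: (ltngtP u w) => h /=.
- by case: ifP => // h2; move: (ltn_trans h2 hp); rewrite ltnn.
- by case: ifP => //; rewrite hp.
- have ew : u = w by apply/val_inj.
  by move: hp; rewrite ew ltnn.
Qed.

Lemma diff_edge (t : 'I_n -> R) (u w : V) : diff t (edge_of u w) = sg u w * (xx t w - xx t u).
Proof.
rewrite /diff /sg /edge_of; case: (ltngtP u w) => h /=.
- by rewrite mul1r.
- by rewrite mulN1r opprB.
- have ew : u = w by apply/val_inj.
  by rewrite ew mul1r.
Qed.

Lemma sgs_sq (s : {perm V}) e : sgs R s e * sgs R s e = 1.
Proof. by rewrite /sgs; case: ifP; rewrite ?mulr1 // mulrNN mulr1. Qed.

End Tools.

Lemma incr_id (f : nat -> nat) m : (forall k, k < m -> f k < f k.+1) ->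
  (forall k, k <= m -> f k <= m) -> forall k, k <= m -> f k = k.
Proof.
move=> Hi Hb.
have lo : forall k, k <= m -> k <= f k.
  elim => [//|k IH] hk; have := Hi k hk; have := IH (ltnW hk); lia.
have hi : forall j, j <= m -> f (m - j) <= m - j.
  elim => [|j IH] hj; first by rewrite subn0; apply: Hb.
  have e : (m - j.+1).+1 = m - j by lia.
  have := Hi (m - j.+1) ltac:(lia); rewrite e; have := IH (ltnW hj); lia.
move=> k hk; have := lo k hk; have := hi (m - k) (leq_subr _ _); rewrite subKn //; lia.
Qed.

Section Main.
Variable n : nat.
Local Notation V := 'I_n.+1.
Variable R : comRingType.
Variable t : 'I_n -> R.

Lemma sgC (u w : V) : u != w -> sg R w u = (- sg R u w)%R.
Proof.
move=> ne; rewrite /sg; case: (ltngtP u w) => h //.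
- by rewrite opprK.
- by move/eqP: ne; case; apply/val_inj.
Qed.

Lemma alg_id (A B C xa xb xp K : R) : (B * B = 1)%R -> (C * C = 1)%R ->
  (A * (xb - xa) * K = A * B * (B * (xb - xp) * K) + (- A) * C * (C * (xa - xp) * K))%R.
Proof.
move=> hB hC.
have e1 : (A * B * (B * (xb - xp) * K) = A * ((xb - xp) * K))%R.
  by rewrite -!mulrA (mulrA B B) hB mul1r.
have e2 : ((- A) * C * (C * (xa - xp) * K) = (- A) * ((xa - xp) * K))%R.
  by rewrite -!mulrA (mulrA C C) hC mul1r.
rewrite e1 e2; ring.
Qed.

Lemma sg_sq (u w : V) : (sg R u w * sg R u w = 1)%R.
Proof. by rewrite /sg; case: ifP; rewrite ?mulr1 // mulrNN mulr1. Qed.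

Local Open Scope ring_scope.

Lemma main_ind : forall m (par : V -> V) (s0 : {perm V}),
  (#|[set s | extb par s]| <= m)%N -> extb par s0 ->
  pY t (Gminus (Epar par)) =
  \sum_(s | extb par s) (-1) ^+ mm (Gminus (Epar par)) s * Ps t s.
Proof.
elim => [|m IH] par s0 hc hs0.
  have : (0 < #|[set s | extb par s]|)%N by apply/card_gt0P; exists s0; rewrite inE.
  by move: hc; rewrite leqn0 => /eqP ->.
have [hs0S hs0E] := extP par s0 hs0.
pose Pn k := (k < n)%N && (par (s0 (inord k.+1)) != s0 (inord k)).
case: (boolP [exists k : 'I_n, Pn k]) => [hex|hnex]; last first.
  have Hpar : forall k, (k < n)%N -> par (s0 (inord k.+1)) = s0 (inord k).
    move=> k hk; apply/eqP; apply: contraNT hnex => h; apply/existsP.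
    by exists (Ordinal hk); rewrite /Pn hk h.
  have B2 : forall u w : V, (pos s0 u < pos s0 w)%N ->
      (edge_of u w \in Epar par) = (pos s0 w == (pos s0 u).+1).
    move=> u w hp; apply/idP/idP.
      case/in_Epar => v hv /edge_ofE [[E1 E2]|[E1 E2]].
        have pv := pos_gt0 hs0S hv.
        have hk : ((pos s0 v).-1 < n)%N by have := pos_lt s0 v; lia.
        have hv' : v = s0 (inord ((pos s0 v).-1).+1) by rewrite prednK // pos_inv.
        rewrite E1 E2 hv' Hpar // !posS //; lia.
      by have := hs0E v hv; rewrite -E2 -E1; lia.
    move=> /eqP hw; apply/in_Epar; exists w.
      by apply: (pos_neq0 hs0S); rewrite hw.
    have hu : (pos s0 u < n)%N by have := pos_lt s0 w; lia.
    have -> : par w = u by rewrite -{1}(pos_inv s0 w) hw Hpar // pos_inv.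
    by [].
  have B1 : forall s, extb par s = (s == s0).
    move=> s; apply/idP/eqP => [hs|->//].
    have [hsS hsE] := extP par s hs.
    pose f k := pos s (s0 (inord k)).
    have Hf : forall k, (k < n)%N -> (f k < f k.+1)%N.
      move=> k hk; rewrite /f -(Hpar k hk); apply: hsE.
      by apply: (pos_neq0 hs0S); rewrite posS.
    have Hb : forall k, (k <= n)%N -> (f k <= n)%N by move=> k _; rewrite /f -ltnS pos_lt.
    have Hid := incr_id Hf Hb.
    apply/permP => i.
    have := Hid i; rewrite -ltnS ltn_ord => /(_ isT); rewrite /f inord_val => h.
    have : (s^-1)%g (s0 i) = i by apply/val_inj.
    by move/(congr1 s); rewrite permKV => ->.
  rewrite (big_pred1 s0) //.
  exact: path_pY.
have exk : exists k, Pn k by case/existsP: hex => k hk; exists k.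
case: (ex_minnP exk) => k /andP[hk hpk] hmin.
have Hpar : forall i, (i < k)%N -> par (s0 (inord i.+1)) = s0 (inord i).
  move=> i hi; apply/eqP; case: eqP => // /eqP h.
  by have := hmin i; rewrite /Pn (ltn_trans hi hk) h => /(_ isT); lia.
have [b Eb] : exists b, b = s0 (inord k.+1) by eexists.
have pb : pos s0 b = k.+1 by rewrite Eb posS.
have hb : b != ord0 by apply: (pos_neq0 hs0S); rewrite pb.
have [p Ep] : exists p, p = par b by eexists.
have hpb := hs0E b hb; rewrite -Ep in hpb.
have [j Ej] : exists j, j = pos s0 p by eexists.
have hjk : (j < k)%N.
  have : j != k.
    apply/eqP => ejk; move/eqP: hpk; apply.
    by rewrite -Eb -Ep -(pos_inv s0 p) -Ej ejk.
  rewrite -Ej pb in hpb; clear -hpb; lia.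
have [a Ea] : exists a, a = s0 (inord j.+1) by eexists.
have pa : pos s0 a = j.+1 by rewrite Ea posS //; clear -hjk hk; lia.
have ppar : par a = p by rewrite Ea Hpar // Ej pos_inv.
have ha : a != ord0 by apply: (pos_neq0 hs0S); rewrite pa.
have nab : a != b by apply/eqP => e; move: pa; rewrite e pb => e'; clear -e' hjk; lia.
have npa : p != a by apply/eqP => e; move: pa; rewrite -e -Ej => e'; clear -e'; lia.
have npb : p != b by apply/eqP => e; move: pb; rewrite -e -Ej => e'; clear -e' hjk; lia.
have hpp_b : p != ord0 -> par p != b.
  move=> hp; have := hs0E p hp; apply: contraTneq => ->; rewrite pb -Ej.
  by clear -hjk; lia.
have hpp_a : p != ord0 -> par p != a.
  move=> hp; have := hs0E p hp; apply: contraTneq => ->; rewrite pa -Ej.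
  by clear -hjk; lia.
have eTa s : extb (upd par b a) s = extb par s && (pos s a < pos s b)%N.
  by apply: ext_upd => //; rewrite ppar Ep.
have eTb s : extb (upd par a b) s = extb par s && (pos s b < pos s a)%N.
  by apply: ext_upd => //; rewrite ?ppar ?Ep // eq_sym.
have neqpos s : pos s a != pos s b by apply/eqP => /pos_inj /eqP; rewrite (negbTE nab).
have notlt s : (~~ (pos s a < pos s b)%N) = (pos s b < pos s a)%N.
  by have := neqpos s; clear; lia.
pose key v := if v == b then j.*2.+1 else (pos s0 v).*2.
have kinj : injective key.
  move=> u v; rewrite /key; case: (eqVneq u b) => [->|nub]; case: (eqVneq v b) => [->|nvb] //.
  - by clear; lia.
  - by clear; lia.
  - by move=> h; apply: (@pos_inj _ s0); clear -h; lia.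
have kmin : forall v, (key ord0 <= key v)%N.
  by move=> v; rewrite /key eq_sym (negbTE hb) pos0.
have [sb [sbS sbK]] := rank_perm kinj kmin.
have hsb : extb (upd par a b) sb.
  apply/extP; split => // v hv; rewrite sbK /key /upd.
  case: (eqVneq v a) => [->|nva].
    by rewrite eqxx (negbTE nab) pa; clear; lia.
  case: (eqVneq v b) => [->|nvb].
    by rewrite -Ep (negbTE npb) -Ej; clear; lia.
  have := hs0E v hv.
  case: (eqVneq (par v) b) => [->|npvb]; last by clear; lia.
  by rewrite pb => h; clear -h hjk; lia.
have cardE : #|[set s | extb par s]| =
    (#|[set s | extb (upd par b a) s]| + #|[set s | extb (upd par a b) s]|)%N.
  rewrite -(cardID [pred s | pos s a < pos s b]%N [set s | extb par s]).
  congr (_ + _)%N; apply: eq_card => s; rewrite !inE.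
    by rewrite eTa andbC.
  by rewrite eTb andbC notlt.
have ca : (0 < #|[set s | extb (upd par b a) s]|)%N.
  apply/card_gt0P; exists s0; rewrite inE eTa hs0 pa pb /=; clear -hjk; lia.
have cb : (0 < #|[set s | extb (upd par a b) s]|)%N.
  by apply/card_gt0P; exists sb; rewrite inE.
have hs0a : extb (upd par b a) s0 by rewrite eTa hs0 pa pb /=; clear -hjk; lia.
have IHa := IH (upd par b a) s0 ltac:(clear -hc cardE cb; lia) hs0a.
have IHb := IH (upd par a b) sb ltac:(clear -hc cardE ca; lia) hsb.
have Sw := Epar_swap (par := par) hb nab ltac:(by rewrite -Ep) ltac:(by rewrite -Ep)
   ltac:(by rewrite ppar) ltac:(by rewrite -Ep).
have Sw' := Epar_swap (par := par) (a := b) (b := a) ha ltac:(by rewrite eq_sym)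
   ltac:(by rewrite ppar) ltac:(by rewrite ppar) ltac:(by rewrite -Ep)
   ltac:(by rewrite ppar).
rewrite (bigID (fun s => pos s a < pos s b)%N) /=.
rewrite (eq_big (fun s => extb (upd par b a) s)
   (fun s => (sg R a b * sg R p b) * ((-1) ^+ mm (Gminus (Epar (upd par b a))) s * Ps t s))); last first.
- move=> s; rewrite -eTa => hs.
  rewrite eTa in hs; case/andP: hs => /extP [_ hsE'] hab.
  rewrite !mm_Pi.
  have [e1 _] := Sw R (sgs R s); have [_ e2] := Sw R (sgs R s).
  have hpb' : (pos s p < pos s b)%N by rewrite Ep; apply: hsE' hb.
  rewrite e1 e2 -Ep (sgs_edge _ hab) (sgs_edge _ hpb') -!mulrA.
  by rewrite (mulrA (sg R p b)) sg_sq mul1r.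
- by move=> s; rewrite eTa.
rewrite -mulr_sumr -IHa.
rewrite (eq_big (fun s => extb (upd par a b) s)
   (fun s => (sg R b a * sg R p a) * ((-1) ^+ mm (Gminus (Epar (upd par a b))) s * Ps t s))); last first.
- move=> s; rewrite notlt -eTb => hs.
  rewrite eTb in hs; case/andP: hs => /extP [_ hsE'] hba.
  rewrite !mm_Pi.
  have [e1 _] := Sw' R (sgs R s); have [_ e2] := Sw' R (sgs R s).
  have hpa' : (pos s p < pos s a)%N by rewrite -ppar; apply: hsE' ha.
  rewrite e1 e2 ppar (sgs_edge _ hba) (sgs_edge _ hpa') -!mulrA.
  by rewrite (mulrA (sg R p a)) sg_sq mul1r.
- by move=> s; rewrite eTb notlt.
rewrite -mulr_sumr -IHb.
rewrite !pY_Pi.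
have [d1 _] := Sw R (diff t); have [_ d2] := Sw R (diff t).
have [_ d3] := Sw' R (diff t).
rewrite d1 d2 d3 ppar -Ep (edge_ofC b a) !diff_edge (sgC nab).
exact: alg_id (sg_sq _ _) (sg_sq _ _).
Qed.

End Main.

Lemma last_iota (x a m : nat) : last x (iota a m.+1) = a + m.
Proof.
elim: m a x => [|m IH] a x /=; first by rewrite addn0.
by have := IH a.+1 a; rewrite /= => ->; rewrite addSnnS.
Qed.

Lemma path_iota (T : Type) (e : rel T) (f : nat -> T) a m :
  (forall k, a <= k -> k < a + m -> e (f k) (f k.+1)) -> path e (f a) (map f (iota a.+1 m)).
Proof.
elim: m a => [|m IH] a H //=.
rewrite H ?leqnn ?addnS ?ltnS ?leq_addr //=.
apply: IH => k hk hk'; apply: H; [exact: ltnW | by rewrite addnS -addSn].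
Qed.

Lemma cycle_mkseq (T : Type) (e : rel T) (f : nat -> T) m : 0 < m ->
  (forall k, k.+1 < m -> e (f k) (f k.+1)) -> e (f m.-1) (f 0) -> path.cycle e (mkseq f m).
Proof.
case: m => // m _ H1 H2; rewrite /mkseq /= rcons_path.
apply/andP; split.
  by apply: path_iota => k _ hk; apply: H1; rewrite add0n in hk.
case: m H1 H2 => [|m] H1 H2 //=.
by have := last_iota 1 1 m; rewrite /= => e1; rewrite (last_map f) e1 add1n.
Qed.

Section Bridge.
Variable n : nat.
Local Notation V := 'I_n.+1.
Variable T : {set edge n}.
Hypothesis hT : is_spanning_tree T.

Lemma adjC x y : adj T x y = adj T y x.
Proof. by rewrite /adj orbC. Qed.

Lemma adj_neq x y : adj T x y -> x != y.
Proof.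
have [hG _] := hT.
case/orP => /hG; rewrite /is_Gedge /= => h; apply/eqP => e; by move: h; rewrite e ltnn.
Qed.

Definition Pd (k : nat) (v : V) : bool :=
  [exists p : k.-tuple V, path (adj T) ord0 p && (last ord0 p == v)].

Lemma PdP k v : reflect (exists q : seq V, [/\ size q = k, path (adj T) ord0 q & last ord0 q = v]) (Pd k v).
Proof.
apply: (iffP existsP) => [[p /andP[h1 /eqP h2]]|[q [h1 h2 h3]]].
  by exists p; split => //; apply: size_tuple.
have hq : size q == k by rewrite h1.
by exists (Tuple hq); rewrite /= h2 h3 eqxx.
Qed.

Lemma Pd_ex v : exists k, Pd k v.
Proof.
have [_ [hc _]] := hT.
case/connectP: (hc ord0 v) => p hp hl.
by exists (size p); apply/PdP; exists p.
Qed.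

Definition dist v := ex_minn (Pd_ex v).

Definition tpar (v : V) : V :=
  if [pick p : (dist v).-tuple V | path (adj T) ord0 p && (last ord0 p == v)] is Some p
  then last ord0 (belast ord0 p) else ord0.

Lemma dist_spec v : Pd (dist v) v /\ forall k, Pd k v -> dist v <= k.
Proof. by rewrite /dist; case: ex_minnP. Qed.

Lemma dist0 : dist ord0 = 0.
Proof.
have [_ hm] := dist_spec ord0; apply/eqP; rewrite -leqn0; apply: hm.
by apply/PdP; exists [::].
Qed.

Lemma dist_eq0 v : dist v = 0 -> v = ord0.
Proof.
move=> h; have [hP _] := dist_spec v; rewrite h in hP.
by case/PdP: hP => q [/size0nil -> _ <-].
Qed.

Lemma tpar_spec v : v != ord0 -> [/\ adj T (tpar v) v, dist (tpar v) = (dist v).-1 & 0 < dist v].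
Proof.
move=> hv; have [hP hmin] := dist_spec v.
have d0 : 0 < dist v by rewrite lt0n; apply/eqP => /dist_eq0 e; rewrite e eqxx in hv.
rewrite /tpar; case: pickP => [p /andP[hp /eqP hl]|hnone]; last first.
  by case/existsP: hP => p hp; move: (hnone p); rewrite hp.
have sz := size_tuple p; move: (tval p) hp hl sz => q0.
case/lastP: q0 => [|q y] hp hl sz; first by move: d0; rewrite -sz.
rewrite last_rcons in hl; subst y.
rewrite belast_rcons /= rcons_path in hp *.
case/andP: hp => hq ha.
have e1 : dist (last ord0 q) <= size q by apply: (proj2 (dist_spec _)); apply/PdP; exists q.
have e2 : dist v <= (dist (last ord0 q)).+1.
  have [hP' _] := dist_spec (last ord0 q).
  case/PdP: hP' => q' [h1 h2 h3]; apply: hmin; apply/PdP; exists (rcons q' v).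
  by rewrite size_rcons h1 rcons_path h2 h3 last_rcons ha.
rewrite size_rcons in sz.
split => //; lia.
Qed.

Lemma dist_iter v k : k <= dist v -> dist (iter k tpar v) = dist v - k.
Proof.
elim: k => [|k IH] hk; first by rewrite subn0.
rewrite iterS; have h := IH (ltnW hk).
have hne : iter k tpar v != ord0.
  by apply/eqP => e; move: h; rewrite e dist0; lia.
have [_ -> _] := tpar_spec hne; rewrite h; lia.
Qed.

Lemma iter_ne0 v k : k < dist v -> iter k tpar v != ord0.
Proof. move=> hk; apply/eqP => e; have := dist_iter (ltnW hk); rewrite e dist0; lia. Qed.

Lemma iter_adj v k : k < dist v -> adj T (iter k.+1 tpar v) (iter k tpar v).
Proof. by move=> hk; rewrite iterS; have [] := tpar_spec (iter_ne0 hk). Qed.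

Lemma iter_dist v : iter (dist v) tpar v = ord0.
Proof. by apply: dist_eq0; rewrite dist_iter // subnn. Qed.

Lemma iter_inj v k1 k2 : k1 <= dist v -> k2 <= dist v -> iter k1 tpar v = iter k2 tpar v -> k1 = k2.
Proof. move=> h1 h2 e; have := dist_iter h1; rewrite e dist_iter //; lia. Qed.

End Bridge.

Section AC.
Variable n : nat.
Local Notation V := 'I_n.+1.
Variable T : {set edge n}.
Hypothesis hT : is_spanning_tree T.
Local Notation tp := (tpar hT).
Local Notation dist := (dist hT).

Lemma acyc x y : adj T x y ->
  (y != ord0 /\ x = tp y) \/ (x != ord0 /\ y = tp x).
Proof.
move=> hxy.
case: (boolP ((y != ord0) && (x == tp y))) => [/andP[h1 /eqP h2]|h1]; first by left.
case: (boolP ((x != ord0) && (y == tp x))) => [/andP[h3 /eqP h4]|h2]; first by right.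
exfalso.
have nxy := adj_neq hT hxy.
pose inAy w := [exists l : 'I_(dist y).+1, iter l tp y == w].
pose Pi i := (i <= dist x) && inAy (iter i tp x).
have exi : exists i, Pi i.
  exists (dist x); rewrite /Pi leqnn /=; apply/existsP; exists ord_max.
  by rewrite /= !iter_dist.
case: (ex_minnP exi) => i /andP[hi /existsP [l /eqP hl]] imin.
have hj : (l <= dist y)%N by rewrite -ltnS.
move: hl hj; move: (nat_of_ord l) => j hl hj.
have [_ [_ hcyc]] := hT.
have sz : (2 <= i + j)%N.
  case: i hi imin hl => [|i] hi imin hl.
    case: j hj hl => [|[|j]] hj hl //.
      by move: hl => /= hl; rewrite hl eqxx in nxy.
    have y0 : y != ord0 by apply/eqP => e; move: hj; rewrite e dist0.
    by move: hl => /= hl; move: h1; rewrite y0 hl eqxx.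
  case: j hj hl => [|j] hj hl; last by clear; lia.
  case: i hi imin hl => [|i] hi imin hl; last by clear; lia.
  have x0 : x != ord0 by apply/eqP => e; move: hi; rewrite e dist0.
  by move: hl => /= hl; move: h2; rewrite x0 -hl eqxx.
pose f k := if (k <= i)%N then iter k tp x else iter (i + j - k) tp y.
have hcy : path.cycle (adj T) (mkseq f (i + j).+1).
  apply: cycle_mkseq => // [k hk|].
    rewrite /f; case: (ltngtP k i) => hki.
    - rewrite adjC; apply: iter_adj; exact: leq_trans hki hi.
    - 
      have -> : (i + j - k = (i + j - k.+1).+1)%N by clear -hk hki; lia.
      apply: iter_adj; clear -hk hki hj; lia.
    - subst k; rewrite -hl.
      have -> : (i + j - i.+1 = j.-1)%N by clear; lia.
      have j0 : (0 < j)%N by clear -hk; lia.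
      rewrite -{1}(prednK j0); apply: iter_adj; clear -j0 hj; lia.
  rewrite /f /=.
  case: (leqP (i + j) i) => hij.
    have j0 : j = 0 by clear -hij; lia.
    by subst j; rewrite addn0 -hl /= adjC.
  by rewrite subnn /= adjC.
have hu : uniq (mkseq f (i + j).+1).
  rewrite /mkseq map_inj_in_uniq ?iota_uniq // => k1 k2.
  rewrite !mem_iota !add0n => /andP[_ hk1] /andP[_ hk2].
  have key : forall a b, (a < (i + j).+1)%N -> (b < (i + j).+1)%N -> (a <= i)%N -> (i < b)%N ->
      f a = f b -> False.
    move=> a b ha hb hai hib; rewrite /f hai leqNgt hib /= => e.
    case: (ltngtP a i) => hai'.
    - have := imin a; rewrite /Pi (leq_trans hai hi) /=.
      have : inAy (iter a tp x).
        apply/existsP; exists (inord (i + j - b)); rewrite inordK; last by clear -hj hb hib; lia.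
        by rewrite e.
      by move=> -> /(_ isT); clear -hai'; lia.
    - by clear -hai hai'; lia.
    - subst a; rewrite -hl in e.
      have := iter_inj (hT := hT) (v := y) (k1 := j) (k2 := i + j - b) hj ltac:(clear -hj hb hib; lia) e.
      by clear -hib hb; lia.
  move=> e; case: (leqP k1 i) => h1'; case: (leqP k2 i) => h2'.
  - by apply: (iter_inj (leq_trans h1' hi) (leq_trans h2' hi)); move: e; rewrite /f h1' h2'.
  - by exfalso; apply: (key k1 k2).
  - by exfalso; apply: (key k2 k1) => //; rewrite e.
  - move: e; rewrite /f leqNgt h1' leqNgt h2' /= => e.
    have := iter_inj (hT := hT) (v := y) (k1 := i + j - k1) (k2 := i + j - k2) ltac:(clear -hj hk1 h1'; lia)
      ltac:(clear -hj hk2 h2'; lia) e.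
    by clear -hk1 hk2; lia.
have := hcyc _ hu; rewrite size_mkseq ltnS => /(_ sz).
by rewrite hcy.
Qed.

End AC.

Lemma LP n (e : rel 'I_n.+1) (par : 'I_n.+1 -> 'I_n.+1) (ps : 'I_n.+1 -> nat) :
  (forall x y, e x y -> (y != ord0 /\ x = par y) \/ (x != ord0 /\ y = par x)) ->
  (forall v, v != ord0 -> ps (par v) < ps v) ->
  forall p, path e ord0 p -> uniq (ord0 :: p) -> forall i, i \in ord0 :: p ->
  i != last ord0 p -> ps i < ps (last ord0 p).
Proof.
move=> He Hp.
have step : forall p x, x != ord0 -> path e x p -> uniq (par x :: x :: p) ->
    path (fun a b => ps a < ps b) x p.
  elim => [//|y p IH] x hx /= /andP[hxy hp] hu.
  case: (He _ _ hxy) => [[hy ex]|[_ ey]].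
    subst x; rewrite Hp //=; apply: IH => //.
    by case/andP: hu.
  by move: hu; rewrite /= -ey !inE eqxx !orbT.
have sortd : forall p x, path (fun a b => ps a < ps b) x p -> forall i, i \in x :: p ->
    i = last x p \/ ps i < ps (last x p).
  elim => [|y p IH] x /=; first by move=> _ i; rewrite inE => /eqP; left.
  case/andP => hxy hp i; rewrite inE => /orP[/eqP ->|hi]; last exact: IH.
  right; case: (IH y hp y (mem_head _ _)) => [<-//|h]; exact: ltn_trans hxy h.
move=> [|y p] hp hu i hi hl.
  by move: hi hl; rewrite inE => /eqP ->; rewrite eqxx.
have /= /andP[h0y hp'] := hp.
case: (He _ _ h0y) => [[hy e0]|[h _]]; last by rewrite eqxx in h.
have hpath : path (fun a b => ps a < ps b) ord0 (y :: p).
  rewrite /= {1}e0 Hp //=; apply: step => //; by rewrite -e0.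
by case: (sortd _ _ hpath i hi) => // ei; rewrite ei eqxx in hl.
Qed.

Lemma edge_of_cases n (x y : 'I_n.+1) : edge_of x y = (x, y) \/ edge_of x y = (y, x).
Proof. by rewrite /edge_of; case: ifP; [left|right]. Qed.

Section TP.
Variable n : nat.
Local Notation V := 'I_n.+1.
Variable s : {perm V}.
Hypothesis hs : is_Sn s.

Definition pp (v : V) : V := s (inord (pos s v).-1).

Lemma Tpath_mem k : k < n -> edge_of (s (inord k)) (s (inord k.+1)) \in Tpath s.
Proof.
move=> hk; apply/imsetP; exists (Ordinal hk) => //.
have e1 : inord k = widen_ord (leqnSn n) (Ordinal hk) :> V by apply/val_inj; rewrite /= inordK //; lia.
have e2 : inord k.+1 = lift ord0 (Ordinal hk) :> V by apply/val_inj; rewrite /= inordK.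
by rewrite e1 e2.
Qed.

Lemma Tpath_inv e : e \in Tpath s -> exists2 k, k < n & e = edge_of (s (inord k)) (s (inord k.+1)).
Proof.
case/imsetP => k _ ->; exists (nat_of_ord k); first exact: ltn_ord.
have e1 : inord k = widen_ord (leqnSn n) k :> V by apply/val_inj; rewrite /= inordK //; have := ltn_ord k; lia.
have e2 : inord k.+1 = lift ord0 k :> V by apply/val_inj; rewrite /= inordK // ltnS ltn_ord.
by rewrite e1 e2.
Qed.

Lemma adj_Tpath_step k : k < n -> adj (Tpath s) (s (inord k)) (s (inord k.+1)).
Proof.
move=> hk; rewrite /adj; case: (edge_of_cases (s (inord k)) (s (inord k.+1))) => E;
by rewrite -E Tpath_mem ?orbT.
Qed.

Lemma s0E : s ord0 = ord0.
Proof. by apply/eqP. Qed.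

Lemma adj_Tpath x y : adj (Tpath s) x y -> (y != ord0 /\ x = pp y) \/ (x != ord0 /\ y = pp x).
Proof.
have key : forall k, k < n -> forall x y, (x = s (inord k) /\ y = s (inord k.+1)) ->
    (y != ord0 /\ x = pp y).
  move=> k hk x' y' [-> ->]; split.
    by apply: (pos_neq0 hs); rewrite posS.
  by rewrite /pp posS.
case/orP => /Tpath_inv [k hk E]; case: (edge_of_cases (s (inord k)) (s (inord k.+1))) => E';
  rewrite E' in E; case: E => -> ->.
- by left; apply: (key k).
- by right; apply: (key k).
- by right; apply: (key k).
- by left; apply: (key k).
Qed.

Lemma pp_lt v : v != ord0 -> pos s (pp v) < pos s v.
Proof.
move=> hv; have h1 := pos_gt0 hs hv; have h2 := pos_lt s v.
by rewrite /pp posS; lia.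
Qed.

Lemma prec_Tpath a b : a < b -> b < n.+1 -> precT (Tpath s) (s (inord a)) (s (inord b)).
Proof.
move=> hab hb; split.
  apply/eqP => /perm_inj /(congr1 (@nat_of_ord _)); rewrite !inordK //; [lia|lia].
pose g k : V := s (inord k).
have g0 : g 0 = ord0 by rewrite /g -s0E; congr (s _); apply: ord_inj; rewrite inordK.
exists (map g (iota 1 b)); rewrite -g0; split.
- apply: path_iota => k _ hk; apply: adj_Tpath_step; lia.
- case: b hab hb => [//|b] hab hb.
  by have := last_iota 0 1 b; rewrite (last_map g) => ->; rewrite add1n.
- have -> : g 0 :: [seq g i | i <- iota 1 b] = map g (iota 0 b.+1) by [].
  rewrite map_inj_in_uniq ?iota_uniq // => u w.
  rewrite !mem_iota /= => hu hw /perm_inj /(congr1 (@nat_of_ord _)).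
  rewrite !inordK; lia.
- have -> : g 0 :: [seq g i | i <- iota 1 b] = map g (iota 0 b.+1) by [].
  apply/mapP; exists a => //.
  by rewrite mem_iota /=; lia.
Qed.

End TP.

Section Final.
Variable n : nat.
Local Notation V := 'I_n.+1.
Variable T : {set edge n}.
Hypothesis hT : is_spanning_tree T.
Local Notation tp := (tpar hT).
Local Notation dist := (dist hT).

Lemma prec_chain v : v != ord0 -> precT T (tp v) v.
Proof.
move=> hv; have [hadj _ d0] := tpar_spec hT hv.
split; first exact: adj_neq hadj.
pose f k := iter (dist v - k) tp v.
have f0 : f 0 = ord0 by rewrite /f subn0 iter_dist.
exists (map f (iota 1 (dist v))); rewrite -f0; split.
- apply: path_iota => k _ hk; rewrite /f.
  have -> : dist v - k = (dist v - k.+1).+1 by lia.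
  by apply: iter_adj; lia.
- case E: (dist v) d0 => [//|d] _.
  have := last_iota 0 1 d; rewrite (last_map f) => ->.
  by rewrite /f add1n E subnn.
- have -> : f 0 :: [seq f i | i <- iota 1 (dist v)] = map f (iota 0 (dist v).+1) by [].
  rewrite map_inj_in_uniq ?iota_uniq // => u w.
  rewrite !mem_iota /= => hu hw; rewrite /f => e.
  have := iter_inj (hT := hT) (v := v) (k1 := dist v - u) (k2 := dist v - w) ltac:(lia) ltac:(lia) e.
  lia.
- have -> : f 0 :: [seq f i | i <- iota 1 (dist v)] = map f (iota 0 (dist v).+1) by [].
  apply/mapP; exists (dist v).-1; first by rewrite mem_iota; lia.
  by rewrite /f; have -> : dist v - (dist v).-1 = 1 by lia.
Qed.

Lemma Epar_T : Epar tp = T.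
Proof.
have [hG _] := hT.
apply/setP => e; apply/in_Epar/idP.
  move=> [v hv ->]; have [hadj _ _] := tpar_spec hT hv.
  rewrite /edge_of; case/orP: hadj => h; have := hG _ h; rewrite /is_Gedge /= => hlt.
    by rewrite hlt.
  by case: ifP => // hh; exfalso; lia.
move=> he; have := hG _ he; case: e he => x y he; rewrite /is_Gedge /= => hxy.
have hadj : adj T x y by rewrite /adj he.
case: (acyc hT hadj) => [[hy ex]|[hx ey]].
  by exists y => //; rewrite -ex /edge_of hxy.
exists x => //; rewrite -ey /edge_of; case: ifP => // hh; exfalso; lia.
Qed.

Lemma compat_ext (s : {perm V}) : is_Sn s -> (compatible T (Tpath s) <-> extb tp s).
Proof.
move=> hs; split.
  case=> r [rinj hr]; apply/extP; split => // v hv.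
  have h := hr _ _ (or_introl (prec_chain hv)).
  have mono : forall a b, a < b -> b < n.+1 -> r (s (inord a)) < r (s (inord b)).
    by move=> a b hab hb; apply: hr; right; apply: prec_Tpath.
  case: (ltngtP (pos s (tp v)) (pos s v)) => // hab.
    have := mono _ _ hab (pos_lt s _); rewrite !pos_inv; lia.
  by move/pos_inj: hab h => ->; rewrite ltnn.
move=> hext; have [_ hE] := extP _ _ hext.
exists (pos s); split; first exact: pos_inj.
move=> i j [[ne [p [hp hl hu hi]]]|[ne [p [hp hl hu hi]]]]; rewrite -hl.
  apply: (LP (e := adj T) (par := tp)) => //; first exact: acyc.
  by rewrite hl.
apply: (LP (e := adj (Tpath s)) (par := pp s)) => //.
- exact: adj_Tpath.
- exact: pp_lt.
- by rewrite hl.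
Qed.

Lemma ext_exists : exists s0, extb tp s0.
Proof.
pose key v := dist v * n.+1 + v.
have kinj : injective key.
  move=> u w h; apply: ord_inj.
  have := congr1 (modn^~ n.+1) h; rewrite /key !modnMDl !modn_small //.
have kmin : forall v, key ord0 <= key v by move=> v; rewrite /key dist0.
have [s [hs hsK]] := rank_perm kinj kmin.
exists s; apply/extP; split => // v hv; rewrite hsK /key.
have [_ hd d0] := tpar_spec hT hv.
rewrite hd.
apply: (@leq_trans ((dist v).-1.+1 * n.+1)).
  by rewrite mulSn addnC ltn_add2r ltn_ord.
by rewrite prednK // leq_addr.
Qed.

End Final.
Local Open Scope ring_scope.

Theorem theorem3p3 (n : nat) (T : {set edge n}) (hT : is_spanning_tree T)
    (R : comRingType) (t : 'I_n -> R) :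
  pY t (Gminus T) =
  \sum_(s : {perm 'I_n.+1} | is_Sn s)
     (-1) ^+ mm (Gminus T) s * Ccoef R T (Tpath s) * Ps t s.
Proof.
have [s0 hs0] := ext_exists hT.
have := main_ind t (leqnn _) hs0; rewrite Epar_T => ->.
rewrite big_mkcond [RHS]big_mkcond; apply: eq_bigr => s _.
case: (boolP (is_Sn s)) => hs; last first.
  have -> : extb (tpar hT) s = false by apply/negbTE; apply: contra hs => /extP [].
  by [].
rewrite /Ccoef; case: excluded_middle_informative => hc.
  by rewrite (proj1 (compat_ext hT hs) hc) mulr1.
have -> : extb (tpar hT) s = false.
  by apply/negbTE/negP => he; apply: hc; apply/(compat_ext hT hs).
by rewrite mulr0 mul0r.
Qed.
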